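(* Let $\mathcal{X}=\{v_1,\dots,v_N\}$ be the node set of a soft tree, i.e. a directed graph whose adjacency matrix $A\in[0,1]^{N\times N}$ is strictly upper triangular and satisfies $A^\top 1_N=(0,1,\dots,1)^\top$, with leaf set $\mathcal{X}_{\rm leaf}$, and let $w=(w_v)_{v\in\mathcal{X}}$ be positive weights. Then the relaxed Tree-Wasserstein distance $W^{\rm relax}_{d_\mathcal{X}}$ is a metric on the set of probability measures supported on $\mathcal{X}_{\rm leaf}$. Moreover, when $A\in\{0,1\}^{N\times N}$ (so that $\mathcal{X}$ is a directed rooted tree with root $v_1$), $W^{\rm relax}_{d_\mathcal{X}}(\mu,\nu)$ equals the Tree-Wasserstein distance, i.e. the 1-Wasserstein distance between $\mu$ and $\nu$ with respect to the tree metric $d_\mathcal{X}$ in which the edge whose deeper endpoint is $v$ has length $w_v$; equivalently $W^{\rm relax}_{d_\mathcal{X}}(\mu,\nu)=\sum_{v\in\mathcal{X}}w_v|\mu(\Gamma(v))-\nu(\Gamma(v))|$, where $\Gamma(v)$ is the set of nodes in the subtree rooted at $v$.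
   Context: As in the setting of SEAL, the nodes are ordered with latent (internal) labels first and observed labels last, $A=\begin{pmatrix}A_1&A_2\\0&0\end{pmatrix}$, and the observed labels form the leaf set $\mathcal{X}_{\rm leaf}$. Set $\alpha=(I-A)^{-1}=\sum_{k\ge0}A^k$ with entries $\alpha_{vx}$. For probability measures $\mu,\nu$ supported on $\mathcal{X}_{\rm leaf}$, the relaxed Tree-Wasserstein distance is $W^{\rm relax}_{d_\mathcal{X}}(\mu,\nu)=\sum_{v\in\mathcal{X}} w_v\left|\sum_{x\in\mathcal{X}_{\rm leaf}}\alpha_{vx}(\mu(x)-\nu(x))\right|$. The tree metric $d_\mathcal{X}(a,b)$ is the length (sum of edge weights) of the path between $a$ and $b$, and the 1-Wasserstein distance is $\min_{\pi\in\Pi(\mu,\nu)}\sum_{a,b} d_\mathcal{X}(a,b)\pi(a,b)$ over couplings $\pi$ of $\mu,\nu$. *)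

(* Defs.v *)
From HB Require Import structures.
From mathcomp Require Import all_boot all_order all_algebra.
Set Implicit Arguments. Unset Strict Implicit. Unset Printing Implicit Defensive.
Import Order.TTheory GRing.Theory Num.Theory.
Local Open Scope ring_scope.

Section Defs.
Variable R : realFieldType.
Variable N : nat.

(* Soft tree on nodes 'I_N (node v_{k+1} is index k, root v_1 is index 0):
   entries in [0,1], strictly upper triangular, A^T 1 = (0,1,...,1)^T. *)
Definition soft_tree (A : 'M[R]_N) : Prop :=
  [/\ forall i j, 0 <= A i j <= 1,
      forall i j : 'I_N, (j <= i)%N -> A i j = 0 &
      forall j : 'I_N, \sum_i A i j = (if val j == 0%N then 0 else 1)].

(* SEAL ordering: the first n nodes are latent, the remaining ones are the
   observed labels (leaves), and the rows of A at leaves vanish: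
   A = (A1 A2 ; 0 0). *)
Definition is_leaf (n : nat) (x : 'I_N) : bool := (n <= x)%N.

Definition leaf_rows_zero (n : nat) (A : 'M[R]_N) : Prop :=
  forall i j, is_leaf n i -> A i j = 0.

Definition alpha (A : 'M[R]_N) : 'M[R]_N := invmx (1%:M - A).

Definition prob_on_leaves (n : nat) (mu : 'I_N -> R) : Prop :=
  [/\ forall x, 0 <= mu x, \sum_x mu x = 1 &
      forall x, ~~ is_leaf n x -> mu x = 0].

Definition W_relax (n : nat) (A : 'M[R]_N) (w : 'I_N -> R)
    (mu nu : 'I_N -> R) : R :=
  \sum_v w v * `| \sum_(x | is_leaf n x) alpha A v x * (mu x - nu x) |.

Definition Gamma (A : 'M[R]_N) (v : 'I_N) : {set 'I_N} :=
  [set x | connect (fun u y => A u y == 1) v x].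

(* tree metric: the edge whose deeper endpoint is v (length w v) lies on
   the path between a and b iff exactly one of a, b lies in Gamma(v). *)
Definition tree_dist (A : 'M[R]_N) (w : 'I_N -> R) (a b : 'I_N) : R :=
  \sum_v w v * ((a \in Gamma A v) != (b \in Gamma A v))%:R.

Definition coupling (mu nu : 'I_N -> R) (pi : 'I_N -> 'I_N -> R) : Prop :=
  [/\ forall a b, 0 <= pi a b,
      forall a, \sum_b pi a b = mu a &
      forall b, \sum_a pi a b = nu b].

Definition transport_cost (d : 'I_N -> 'I_N -> R) (pi : 'I_N -> 'I_N -> R) : R :=
  \sum_a \sum_b d a b * pi a b.

Definition is_W1 (d : 'I_N -> 'I_N -> R) (mu nu : 'I_N -> R) (c : R) : Prop :=
  (exists pi, coupling mu nu pi /\ transport_cost d pi = c) /\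
  (forall pi, coupling mu nu pi -> c <= transport_cost d pi).

End Defs.

(* Main.v *)
Require Import Defs.
From HB Require Import structures.
From mathcomp Require Import all_boot all_order all_algebra.
From Stdlib Require Import FunctionalExtensionality.
From mathcomp Require Import lra.
Set Implicit Arguments. Unset Strict Implicit. Unset Printing Implicit Defensive.
Import Order.TTheory GRing.Theory Num.Theory.
Local Open Scope ring_scope.

Lemma IA_unit (R : realFieldType) (N : nat) (A : 'M[R]_N) :
  soft_tree A -> (1%:M - A) \in unitmx.
Proof.
case=> _ Hlow _.
rewrite unitmxE -det_tr det_trig.
  rewrite (eq_bigr (fun _ => 1)); first by rewrite big1_eq unitr1.
  move=> i _.
  by rewrite !mxE Hlow // eqxx subr0.
apply/is_trig_mxP => i j ij; rewrite !mxE Hlow ?(ltnW ij) //.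
case: eqP => [ji|_]; last by rewrite subr0.
by move: ij; rewrite ji ltnn.
Qed.

Lemma alpha_leaf (R : realFieldType) (N n : nat) (A : 'M[R]_N) v x :
  soft_tree A -> leaf_rows_zero n A -> is_leaf n v ->
  alpha A v x = (v == x)%:R.
Proof.
move=> sA lz lv.
have := congr1 (fun M : 'M[R]_N => M v x) (mulmxV (IA_unit sA)).
rewrite mulmxBl mul1mx !mxE => <-.
rewrite big1 ?subr0 // => u _; by rewrite lz // mul0r.
Qed.

Lemma part1 (R : realFieldType) (N n : nat) (A : 'M[R]_N) (w : 'I_N -> R) :
  soft_tree A -> leaf_rows_zero n A -> (forall v, 0 < w v) ->
  ((forall mu nu, prob_on_leaves n mu -> prob_on_leaves n nu ->
       0 <= W_relax n A w mu nu /\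
       W_relax n A w mu nu = W_relax n A w nu mu /\
       (W_relax n A w mu nu = 0 <-> mu = nu)) /\
   (forall mu nu rho, prob_on_leaves n mu -> prob_on_leaves n nu ->
       prob_on_leaves n rho ->
       W_relax n A w mu rho <= W_relax n A w mu nu + W_relax n A w nu rho)).
Proof.
move=> sA lz wpos; split.
  move=> mu nu [mu0 mu1 muL] [nu0 nu1 nuL]; split.
    by apply: sumr_ge0 => v _; apply: mulr_ge0; [exact: ltW | exact: normr_ge0].
  split.
    rewrite /W_relax; apply: eq_bigr => v _; congr (_ * _).
    rewrite -normrN -sumrN; congr `| _ |; apply: eq_bigr => y _.
    by rewrite -mulrN opprB.
  split; last first.
    move=> <-; rewrite /W_relax big1 // => v _.
    by rewrite big1 ?normr0 ?mulr0 // => y _; rewrite subrr mulr0.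
  move=> /eqP; rewrite /W_relax psumr_eq0; last first.
    by move=> v _; apply: mulr_ge0; [exact: ltW | exact: normr_ge0].
  move=> /allP H; apply: functional_extensionality => x.
  case lx: (is_leaf n x); last by rewrite muL ?nuL ?lx.
  have := H x (mem_index_enum x); rewrite implyTb.
  rewrite mulf_eq0 (gt_eqF (wpos x)) /= normr_eq0 => /eqP.
  rewrite (bigD1 x) //= big1 ?addr0.
    by rewrite (@alpha_leaf _ _ n _ x x sA lz lx) eqxx mul1r => /eqP; rewrite subr_eq0 => /eqP.
  by move=> y /andP[_ yx]; rewrite (@alpha_leaf _ _ n _ x y sA lz lx) eq_sym (negbTE yx) mul0r.
move=> mu nu rho _ _ _; rewrite /W_relax -big_split /=.
apply: ler_sum => v _; rewrite -mulrDr; apply: ler_wpM2l; first exact: ltW.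
have -> : \sum_(x | is_leaf n x) alpha A v x * (mu x - rho x) =
   \sum_(x | is_leaf n x) alpha A v x * (mu x - nu x) +
   \sum_(x | is_leaf n x) alpha A v x * (nu x - rho x).
  by rewrite -big_split; apply: eq_bigr => y _ /=; rewrite -mulrDr addrA subrK.
exact: ler_normD.
Qed.

Lemma sum_delta (R : realFieldType) (T : finType) (c : R) (a : T) :
  \sum_x c * (x == a)%:R = c.
Proof.
rewrite (bigD1 a) //= eqxx mulr1 big1 ?addr0 // => x xa.
by rewrite (negbTE xa) mulr0.
Qed.

Lemma sum_delta_set (R : realFieldType) (T : finType) (S : {set T}) (c : R) (a : T) :
  \sum_(x in S) c * (x == a)%:R = c * (a \in S)%:R.
Proof.
case Sa: (a \in S).
  rewrite (bigD1 a) //= eqxx mulr1 big1 ?addr0 // => x /andP[_ xa].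
  by rewrite (negbTE xa) mulr0.
rewrite mulr0 big1 // => x xS; case: eqP => [e|_]; last by rewrite mulr0.
by rewrite -e xS in Sa.
Qed.

Lemma sum2_delta (R : realFieldType) (T : finType) (F : T -> T -> R) (a b : T) :
  \sum_x \sum_y F x y * ((x == a) && (y == b))%:R = F a b.
Proof.
rewrite (bigD1 a) //= [X in _ + X]big1 => [|x xa].
  rewrite addr0 (bigD1 b) //= !eqxx mulr1 big1 ?addr0 // => y yb.
  by rewrite (negbTE yb) mulr0.
by rewrite big1 // => y _; rewrite (negbTE xa) mulr0.
Qed.

Lemma sum_ge_mem (R : realFieldType) (T : finType) (S : {set T}) (f : T -> R) x :
  (forall y, 0 <= f y) -> x \in S -> f x <= \sum_(y in S) f y.
Proof.
move=> f0 xS; rewrite (bigD1 x) //= lerDl.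
by apply: sumr_ge0 => y _.
Qed.

Lemma sep_proper (T I : finType) (G : I -> {set T}) :
  (forall u v x, x \in G u -> x \in G v -> G u \subset G v \/ G v \subset G u) ->
  forall (p q r : T) v, p \in G v -> q \notin G v -> r \in G v ->
  [set u | (p \in G u) && (q \in G u)] \proper [set u | (p \in G u) && (r \in G u)].
Proof.
move=> lam p q r v pv qv rv; apply/properP; split.
  apply/subsetP => u; rewrite !inE => /andP[pu qu]; rewrite pu /=.
  case: (lam u v p pu pv) => /subsetP H.
    by rewrite (H q qu) in qv.
  exact: H.
by exists v; rewrite !inE ?pv ?rv //= (negbTE qv) andbF.
Qed.

Definition cross (R : realFieldType) (T I : finType) (G : I -> {set T})
  (pi : T -> T -> R) v :=
  \sum_a \sum_b ((a \in G v) != (b \in G v))%:R * pi a b.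

Definition good_pi (R : realFieldType) (T I : finType) (G : I -> {set T})
  (mu nu : T -> R) (pi : T -> T -> R) :=
  [/\ forall a b, 0 <= pi a b, forall a, \sum_b pi a b = mu a,
      forall b, \sum_a pi a b = nu b &
      forall v, cross G pi v =
        `|\sum_(x in G v) mu x - \sum_(x in G v) nu x| ].

Lemma zero_case (R : realFieldType) (T I : finType) (G : I -> {set T})
  (mu nu : T -> R) :
  (forall x, mu x = 0) -> (forall x, 0 <= nu x) -> \sum_x mu x = \sum_x nu x ->
  exists pi, good_pi G mu nu pi.
Proof.
move=> m0 n0 E.
have nz : forall x, nu x = 0.
  move=> x; apply: (@psumr_eq0P _ _ predT) => //.
  by rewrite -E big1.
exists (fun _ _ => 0); split => //.
- by move=> a; rewrite big1 ?m0.
- by move=> b; rewrite big1 ?nz.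
move=> v; rewrite /cross big1 => [|a _]; last by rewrite big1 // => b _; rewrite mulr0.
by rewrite !big1 ?subrr ?normr0.
Qed.

Lemma key (R : realFieldType) (T I : finType) (G : I -> {set T}) :
  (forall u v x, x \in G u -> x \in G v -> G u \subset G v \/ G v \subset G u) ->
  forall (k : nat) (mu nu : T -> R),
  (#|[set x | mu x != 0%R]| + #|[set x | nu x != 0%R]| <= k)%N ->
  (forall x, 0 <= mu x) -> (forall x, 0 <= nu x) -> \sum_x mu x = \sum_x nu x ->
  exists pi, good_pi G mu nu pi.
Proof.
move=> lam; elim=> [|k IH] mu nu hk mu0 nu0 E.
  apply: zero_case => // x; apply/eqP/negPn/negP => hx.
  have : x \in [set x | mu x != 0] by rewrite inE.
  move: hk; rewrite leqn0 addn_eq0 => /andP[/eqP/cards0_eq -> _].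
  by rewrite inE.
case: (pickP (fun x => mu x != 0)) => [a0 Ha0|H0]; last first.
  by apply: zero_case => // x; apply/eqP; move: (H0 x) => /negbFE.
have mua0 : 0 < mu a0 by rewrite lt_def Ha0 mu0.
case: (pickP (fun x => nu x != 0)) => [b0 Hb0|Hn]; last first.
  have : \sum_x mu x = 0 by rewrite E big1 // => x _; apply/eqP; move: (Hn x) => /negbFE.
  move/(@psumr_eq0P _ _ predT) => H; rewrite H // in Ha0; by rewrite eqxx in Ha0.
pose P := fun p : T * T => (mu p.1 != 0) && (nu p.2 != 0).
pose score := fun p : T * T => #|[set u | (p.1 \in G u) && (p.2 \in G u)]|.
have P0 : P (a0, b0) by rewrite /P /= Ha0 Hb0.
case: (arg_maxnP score P0) => [[a b]] /andP[/= Ha Hb] Hmax.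
have claim1 : forall v, a \in G v -> b \notin G v -> forall x, x \in G v -> nu x = 0.
  move=> v av bv x xv; apply/eqP/negPn/negP => nx.
  have := Hmax (a, x); rewrite /P /= Ha nx => /(_ isT).
  by rewrite /score /= leqNgt (proper_card (sep_proper lam av bv xv)).
have claim2 : forall v, b \in G v -> a \notin G v -> forall x, x \in G v -> mu x = 0.
  move=> v bv av x xv; apply/eqP/negPn/negP => mx.
  have := Hmax (x, b); rewrite /P /= Hb mx => /(_ isT).
  have e1 : forall y, [set u | (y \in G u) && (b \in G u)] = [set u | (b \in G u) && (y \in G u)].
    by move=> y; apply/setP => u; rewrite !inE andbC.
  by rewrite /score /= !e1 leqNgt (proper_card (sep_proper lam bv av xv)).
have mua : 0 < mu a by rewrite lt_def Ha mu0.
have nub : 0 < nu b by rewrite lt_def Hb nu0.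
pose t := Num.min (mu a) (nu b).
have t0 : 0 < t by rewrite lt_min mua nub.
have tmu : t <= mu a by rewrite ge_min lexx.
have tnu : t <= nu b by rewrite ge_min lexx orbT.
pose mu' := fun x => mu x - t * (x == a)%:R.
pose nu' := fun x => nu x - t * (x == b)%:R.
have mu'0 : forall x, 0 <= mu' x.
  move=> x; rewrite /mu'; case: eqP => [->|_]; first by rewrite mulr1 subr_ge0.
  by rewrite mulr0 subr0.
have nu'0 : forall x, 0 <= nu' x.
  move=> x; rewrite /nu'; case: eqP => [->|_]; first by rewrite mulr1 subr_ge0.
  by rewrite mulr0 subr0.
have E' : \sum_x mu' x = \sum_x nu' x.
  by rewrite /mu' /nu' !sumrB !sum_delta E.
have sub1 : [set x | mu' x != 0] \subset [set x | mu x != 0].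
  apply/subsetP => x; rewrite !inE /mu'; apply: contra => /eqP mx.
  have xa : x != a by apply/eqP => e; move: Ha; rewrite -e mx eqxx.
  by rewrite (negbTE xa) mulr0 subr0 mx.
have sub2 : [set x | nu' x != 0] \subset [set x | nu x != 0].
  apply/subsetP => x; rewrite !inE /nu'; apply: contra => /eqP nx.
  have xb : x != b by apply/eqP => e; move: Hb; rewrite -e nx eqxx.
  by rewrite (negbTE xb) mulr0 subr0 nx.
have hk' : (#|[set x | mu' x != 0%R]| + #|[set x | nu' x != 0%R]| <= k)%N.
  rewrite -ltnS; apply: leq_trans hk.
  have [ta|ta] := leP (mu a) (nu b).
    have pr : [set x | mu' x != 0] \proper [set x | mu x != 0].
      apply/properP; split => //; exists a; rewrite !inE ?Ha //.
      by rewrite /mu' eqxx mulr1 /t (min_l ta) subrr eqxx.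
    rewrite -addSn leq_add ?(proper_card pr) //; exact: subset_leq_card.
  have pr : [set x | nu' x != 0] \proper [set x | nu x != 0].
    apply/properP; split => //; exists b; rewrite !inE ?Hb //.
    by rewrite /nu' eqxx mulr1 /t (min_r (ltW ta)) subrr eqxx.
  rewrite -addnS leq_add ?(proper_card pr) //; exact: subset_leq_card.
have [pi' [pi0 pir pic picr]] := IH mu' nu' hk' mu'0 nu'0 E'.
exists (fun x y => pi' x y + t * ((x == a) && (y == b))%:R); split.
- by move=> x y; apply: addr_ge0 => //; apply: mulr_ge0; [exact: ltW|exact: ler0n].
- move=> x; rewrite big_split /= pir /mu'; case: (x =P a) => [->|xa] /=.
    by rewrite sum_delta mulr1 subrK.
  by rewrite mulr0 subr0 big1 ?addr0 // => y _; rewrite mulr0.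
- move=> y; rewrite big_split /= pic /nu'; case: (y =P b) => [->|yb] /=.
    under eq_bigr => x _ do rewrite andbT.
    by rewrite sum_delta mulr1 subrK.
  by rewrite mulr0 subr0 big1 ?addr0 // => x _; rewrite andbF mulr0.
move=> v; rewrite /cross.
have -> : \sum_x \sum_y ((x \in G v) != (y \in G v))%:R *
     (pi' x y + t * ((x == a) && (y == b))%:R) =
   \sum_x \sum_y ((x \in G v) != (y \in G v))%:R * pi' x y +
   \sum_x \sum_y (((x \in G v) != (y \in G v))%:R * t) * ((x == a) && (y == b))%:R.
  rewrite -big_split; apply: eq_bigr => x _; rewrite -big_split.
  by apply: eq_bigr => y _ /=; rewrite mulrDr mulrA.
rewrite sum2_delta; have := picr v; rewrite /cross => ->.
rewrite /mu' /nu' !sumrB !sum_delta_set.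
case av: (a \in G v); case bv: (b \in G v) => /=.
- by rewrite mul0r addr0 opprB addrA subrK.
- rewrite [\sum_(x in G v) nu x]big1 => [|x xv]; last exact: (claim1 v av (negbT bv) x xv).
  rewrite mulr1 mulr0 !subr0 mul1r.
  have mG : mu a <= \sum_(x in G v) mu x by apply: sum_ge_mem.
  rewrite !ger0_norm ?subrK // ?subr_ge0.
    exact: le_trans (ltW mua) mG.
  exact: le_trans tmu mG.
- rewrite [\sum_(x in G v) mu x]big1 => [|x xv]; last first.
    exact: (claim2 v bv (negbT av) x xv).
  rewrite mulr1 mulr0 !subr0 mul1r !sub0r !normrN.
  have nG : nu b <= \sum_(x in G v) nu x by apply: sum_ge_mem.
  rewrite (ger0_norm (le_trans (ltW nub) nG)) ger0_norm ?subrK //.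
  rewrite subr_ge0; exact: le_trans tnu nG.
- by rewrite !mulr0 !subr0 mul0r addr0.
Qed.

Lemma edge_lt (R : realFieldType) (N : nat) (A : 'M[R]_N) i j :
  soft_tree A -> A i j = 1 -> (i < j)%N.
Proof.
case=> _ Hlow _ H; rewrite ltnNge; apply/negP => ji.
by move: H; rewrite Hlow // => /eqP; rewrite eq_sym oner_eq0.
Qed.

Lemma conn_le (R : realFieldType) (N : nat) (A : 'M[R]_N) u x :
  soft_tree A -> connect (fun u y => A u y == 1) u x -> (u <= x)%N.
Proof.
move=> sA /connectP[p pp ->]; elim: p u pp => [|y p IH] u //= /andP[/eqP uy py].
exact: leq_trans (ltnW (edge_lt sA uy)) (IH y py).
Qed.

Lemma uniq_parent (R : realFieldType) (N : nat) (A : 'M[R]_N) p q x :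
  soft_tree A -> A p x = 1 -> A q x = 1 -> p = q.
Proof.
move=> [H01 _ Hcol] px qx; apply/eqP/negPn/negP => pq.
have : \sum_i A i x <= 1 by rewrite Hcol; case: ifP.
have A0 : forall i, 0 <= A i x by move=> i; case/andP: (H01 i x).
rewrite (bigD1 p) //= (bigD1 q) 1?eq_sym //= px qx.
have : 0 <= \sum_(i | (i != p) && (i != q)) A i x by apply: sumr_ge0.
move=> h1 h2.
have : 1 + (1 + 0) <= 1 + (1 + \sum_(i | (i != p) && (i != q)) A i x).
  by rewrite !lerD2l.
move=> h3; have := le_trans h3 h2; lra.
Qed.

Lemma last_step (R : realFieldType) (N : nat) (A : 'M[R]_N) u x :
  connect (fun u y => A u y == 1) u x -> u != x ->
  exists2 p, connect (fun u y => A u y == 1) u p & A p x = 1.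
Proof.
move=> /connectP[s]; case/lastP: s => [|s y] /=; first by move=> _ ->; rewrite eqxx.
rewrite rcons_path last_rcons => /andP[ps /eqP ey] -> _.
by exists (last u s) => //; apply/connectP; exists s.
Qed.

Lemma laminar_conn (R : realFieldType) (N : nat) (A : 'M[R]_N) u v x :
  soft_tree A ->
  connect (fun u y => A u y == 1) u x -> connect (fun u y => A u y == 1) v x ->
  connect (fun u y => A u y == 1) u v \/ connect (fun u y => A u y == 1) v u.
Proof.
move=> sA; have : (x < x.+1)%N by [].
move: {2}(x.+1) => m; elim: m x => [|m IH] x //= xm ux vx.
case: (eqVneq u x) => [ex|ux'].
  by right; rewrite ex.
case: (eqVneq v x) => [ex|vx'].
  by left; rewrite ex.
have [p up px] := last_step ux ux'.
have [q vq qx] := last_step vx vx'.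
have epq := uniq_parent sA px qx; subst q.
apply: (IH p) => //; have := edge_lt sA px; rewrite ltnS in xm.
by move=> h; exact: leq_trans h xm.
Qed.

Lemma Gamma_laminar (R : realFieldType) (N : nat) (A : 'M[R]_N) :
  soft_tree A -> forall u v x, x \in Gamma A u -> x \in Gamma A v ->
  Gamma A u \subset Gamma A v \/ Gamma A v \subset Gamma A u.
Proof.
move=> sA u v x; rewrite !inE => ux vx.
case: (laminar_conn sA ux vx) => h.
  by right; apply/subsetP => y; rewrite !inE; exact: connect_trans h.
by left; apply/subsetP => y; rewrite !inE; exact: connect_trans h.
Qed.

Lemma alpha01 (R : realFieldType) (N : nat) (A : 'M[R]_N) v x :
  soft_tree A -> (forall i j, A i j = 0 \/ A i j = 1) ->
  alpha A v x = (x \in Gamma A v)%:R.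
Proof.
move=> sA A01.
pose M := \matrix_(v, x) (x \in Gamma A v)%:R : 'M[R]_N.
have HM : M *m (1%:M - A) = 1%:M.
  apply/matrixP => u y; rewrite mulmxBr mulmx1 !mxE.
  under eq_bigr do rewrite mxE.
  rewrite /Gamma !inE.
  case: (pickP (fun p => A p y == 1)) => [p /eqP py|np].
    rewrite (bigD1 p) //= big1 ?addr0 => [|i ip]; last first.
      case: (A01 i y) => [->|iy]; first by rewrite mulr0.
      by rewrite (uniq_parent sA iy py) eqxx in ip.
    rewrite py mulr1 inE.
    case: (eqVneq u y) => [e|uy].
      subst y.
      rewrite connect0.
      case c: (connect (fun u y => A u y == 1) u p); last by rewrite subr0.
      by have := leq_trans (edge_lt sA py) (conn_le sA c); rewrite ltnn.
    have -> : connect (fun u y => A u y == 1) u y = connect (fun u y => A u y == 1) u p.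
      apply/idP/idP => h.
        have [q uq qy] := last_step h uy.
        by rewrite -(uniq_parent sA qy py).
      by apply: connect_trans h (connect1 _); rewrite /= py.
    by rewrite subrr.
  rewrite big1 ?subr0 => [|i _]; last first.
    case: (A01 i y) => [->|iy]; first by rewrite mulr0.
    by move: (np i); rewrite iy eqxx.
  case: (eqVneq u y) => [<-|uy]; first by rewrite connect0.
  case c: (connect (fun u y => A u y == 1) u y) => //.
  have [q uq qy] := last_step c uy.
  by move: (np q); rewrite qy eqxx.
have [uM _] := mulmx1_unit HM.
have := congr1 (fun B : 'M[R]_N => (B *m invmx (1%:M - A)) v x) HM.
rewrite -mulmxA mulmxV ?IA_unit // mulmx1 mul1mx mxE => ->.
by [].
Qed.

Lemma cost_cross (R : realFieldType) (N : nat) (A : 'M[R]_N) (w : 'I_N -> R) pi :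
  transport_cost (tree_dist A w) pi = \sum_v w v * cross (Gamma A) pi v.
Proof.
rewrite /transport_cost /tree_dist /cross.
under eq_bigr => a _ do under eq_bigr => b _ do rewrite mulr_suml.
under eq_bigr => a _ do rewrite exchange_big.
rewrite exchange_big; apply: eq_bigr => v _.
rewrite mulr_sumr; apply: eq_bigr => a _.
rewrite mulr_sumr; apply: eq_bigr => b _.
by rewrite mulrA.
Qed.

Lemma cross_ge (R : realFieldType) (N : nat) (mu nu : 'I_N -> R) pi (S : {set 'I_N}) :
  coupling mu nu pi ->
  `|\sum_(x in S) mu x - \sum_(x in S) nu x| <=
  \sum_a \sum_b ((a \in S) != (b \in S))%:R * pi a b.
Proof.
case=> pi0 pimu pinu.
have h1 : \sum_(x in S) mu x = \sum_a \sum_b (a \in S)%:R * pi a b.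
  rewrite big_mkcond; apply: eq_bigr => a _; rewrite -mulr_sumr pimu.
  by case: (a \in S); rewrite ?mul1r ?mul0r.
have h2 : \sum_(x in S) nu x = \sum_a \sum_b (b \in S)%:R * pi a b.
  rewrite [RHS]exchange_big big_mkcond; apply: eq_bigr => b _ /=.
  rewrite -mulr_sumr pinu.
  by case: (b \in S); rewrite ?mul1r ?mul0r.
rewrite h1 h2 -sumrB; under eq_bigr do rewrite -sumrB.
apply: le_trans (ler_norm_sum _ _ _) _; apply: ler_sum => a _.
apply: le_trans (ler_norm_sum _ _ _) _; apply: ler_sum => b _.
rewrite -mulrBl normrM (ger0_norm (pi0 a b)).
by case: (a \in S); case: (b \in S); rewrite /= ?subrr ?subr0 ?sub0r ?normrN ?normr0 ?normr1.
Qed.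

Lemma W_formula (R : realFieldType) (N n : nat) (A : 'M[R]_N) (w : 'I_N -> R) mu nu :
  soft_tree A -> (forall i j, A i j = 0 \/ A i j = 1) ->
  prob_on_leaves n mu -> prob_on_leaves n nu ->
  W_relax n A w mu nu =
  \sum_v w v * `| \sum_(x in Gamma A v) mu x - \sum_(x in Gamma A v) nu x |.
Proof.
move=> sA A01 [_ _ muL] [_ _ nuL].
apply: eq_bigr => v _; congr (_ * `|_|).
rewrite -sumrB big_mkcond [RHS]big_mkcond; apply: eq_bigr => x _ /=.
rewrite alpha01 //.
case lx: (is_leaf n x); last first.
  rewrite (muL x) ?lx // (nuL x) ?lx // subrr; by case: ifP.
by case: (x \in Gamma A v); rewrite ?mul1r ?mul0r.
Qed.

Theorem theorem4 (R : realFieldType) (N n : nat) (A : 'M[R]_N) (w : 'I_N -> R) :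
  soft_tree A -> leaf_rows_zero n A -> (forall v, 0 < w v) ->
  (* W_relax is a metric on probability measures supported on the leaves *)
  ((forall mu nu, prob_on_leaves n mu -> prob_on_leaves n nu ->
       0 <= W_relax n A w mu nu /\
       W_relax n A w mu nu = W_relax n A w nu mu /\
       (W_relax n A w mu nu = 0 <-> mu = nu)) /\
   (forall mu nu rho, prob_on_leaves n mu -> prob_on_leaves n nu ->
       prob_on_leaves n rho ->
       W_relax n A w mu rho <= W_relax n A w mu nu + W_relax n A w nu rho)) /\
  (* 0/1 case: equals the Tree-Wasserstein distance *)
  ((forall i j, A i j = 0 \/ A i j = 1) ->
   forall mu nu, prob_on_leaves n mu -> prob_on_leaves n nu ->
     is_W1 (tree_dist A w) mu nu (W_relax n A w mu nu) /\
     W_relax n A w mu nu =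
       \sum_v w v * `| \sum_(x in Gamma A v) mu x - \sum_(x in Gamma A v) nu x |).
Proof.
move=> sA lz wpos; split; first exact: part1.
move=> A01 mu nu pmu pnu.
have WF := W_formula w sA A01 pmu pnu.
split => //; rewrite WF; split.
  case: pmu => mu0 mu1 _; case: pnu => nu0 nu1 _.
  have [pi [pi0 pir pic picr]] :=
    @key R _ _ (Gamma A) (Gamma_laminar sA) _ mu nu (leqnn _) mu0 nu0
      (etrans mu1 (esym nu1)).
  exists pi; split; first by split.
  by rewrite cost_cross; apply: eq_bigr => v _; rewrite picr.
move=> pi cpi; rewrite cost_cross; apply: ler_sum => v _.
apply: ler_wpM2l; first exact: ltW.
exact: cross_ge.
Qed.
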